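(* Let $s\in\mathbb C$ with $\mathrm{Re}\,s>-2$. Then: (1) for every prime $p\ne3$, $$\sum_{k=0}^{\infty}\frac{T(p^k)}{p^{ks}}=\frac{1}{1-p^{-(3s+6)}}\Big(1+\frac{1}{p^{s+7}}\sum_{c=1}^{p-1}|S(p,c)|^6+\frac{p-1}{p^{2s+7}}-\frac{1}{p^{3s+7}}\Big);$$ (2) $$\sum_{k=0}^{\infty}\frac{T(3^k)}{3^{ks}}=\frac{1}{1-3^{-(3s+6)}}\Big(1+\frac{1}{3^{2s+14}}\sum_{\substack{c=1\\(c,3)=1}}^{9}|S(9,c)|^6-\frac{1}{3^{3s+7}}\Big),$$ the series converging absolutely.
   Context: Write $e(\alpha)=e^{2\pi i\alpha}$. For integers $q\ge1$ and $c$, $S(q,c)=\sum_{m=1}^{q}e(cm^3/q)$, and $T(q)=q^{-7}\sum_{1\le c\le q,(c,q)=1}|S(q,c)|^6$. *)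

(* Defs.v *)
From Stdlib Require Import Reals ZArith Znumtheory.
From Coquelicot Require Import Coquelicot.
Open Scope R_scope.

Definition e (a : R) : C := (cos (2 * PI * a), sin (2 * PI * a)).

Definition S (q : nat) (c : Z) : C :=
  sum_n_m (G := C_AbelianMonoid) (fun m : nat => e (IZR c * INR m ^ 3 / INR q)) 1 q.

Definition T (q : nat) : R :=
  / (INR q ^ 7) *
  sum_n_m (G := R_AbelianMonoid)
    (fun c : nat => if Nat.eqb (Nat.gcd c q) 1 then Cmod (S q (Z.of_nat c)) ^ 6 else 0)
    1 q.

(* complex power x^z for a real base x > 0: exp(z ln x) *)
Definition cpow (x : R) (z : C) : C :=
  RtoC (exp (Re z * ln x)) * (cos (Im z * ln x), sin (Im z * ln x)).

(* Main.v *)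
Require Import Defs.
From Stdlib Require Import Reals ZArith Znumtheory Lia Lra.
From Coquelicot Require Import Coquelicot.

Section SecA.

Local Open Scope R_scope.
Local Notation Sc := Datatypes.S.

Fixpoint csum (n : nat) (f : nat -> C) : C :=
  match n with O => RtoC 0 | Sc n => Cplus (csum n f) (f n) end.
Fixpoint rsum (n : nat) (f : nat -> R) : R :=
  match n with O => 0 | Sc n => rsum n f + f n end.

Lemma csum_ext_lt n f g : (forall i, (i < n)%nat -> f i = g i) -> csum n f = csum n g.
Proof. induction n; simpl; intros H; auto. rewrite IHn, H; auto. Qed.
Lemma rsum_ext_lt n f g : (forall i, (i < n)%nat -> f i = g i) -> rsum n f = rsum n g.
Proof. induction n; simpl; intros H; auto. rewrite IHn, H; auto. Qed.

Lemma csum_plus n f g : csum n (fun i => Cplus (f i) (g i)) = Cplus (csum n f) (csum n g).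
Proof. induction n; simpl. apply injective_projections; simpl; ring. rewrite IHn. ring. Qed.
Lemma rsum_plus n f g : rsum n (fun i => f i + g i) = rsum n f + rsum n g.
Proof. induction n; simpl. ring. rewrite IHn. ring. Qed.

Lemma csum_app a b f : csum (a + b) f = Cplus (csum a f) (csum b (fun i => f (a + i)%nat)).
Proof. induction b; simpl. rewrite Nat.add_0_r. apply injective_projections; simpl; ring.
  rewrite Nat.add_succ_r; simpl. rewrite IHb. ring. Qed.
Lemma rsum_app a b f : rsum (a + b) f = rsum a f + rsum b (fun i => f (a + i)%nat).
Proof. induction b; simpl. rewrite Nat.add_0_r. ring.
  rewrite Nat.add_succ_r; simpl. rewrite IHb. ring. Qed.

Lemma csum_first n f : csum (Sc n) f = Cplus (f O) (csum n (fun i => f (Sc i))).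
Proof. change (Sc n) with (1 + n)%nat. rewrite csum_app. simpl.
  apply f_equal2; auto. apply injective_projections; simpl; ring. Qed.
Lemma rsum_first n f : rsum (Sc n) f = f O + rsum n (fun i => f (Sc i)).
Proof. change (Sc n) with (1 + n)%nat. rewrite rsum_app. simpl. ring. Qed.

Lemma csum_mult_l a n f : Cmult a (csum n f) = csum n (fun i => Cmult a (f i)).
Proof. induction n; simpl. apply injective_projections; simpl; ring. rewrite <- IHn. ring. Qed.
Lemma rsum_mult_l a n f : a * rsum n f = rsum n (fun i => a * f i).
Proof. induction n; simpl. ring. rewrite <- IHn. ring. Qed.

Lemma csum_const n a : csum n (fun _ => a) = Cmult (RtoC (INR n)) a.
Proof. induction n; simpl csum. apply injective_projections; simpl; ring.
  rewrite IHn, S_INR. apply injective_projections; simpl; ring. Qed.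
Lemma rsum_const n a : rsum n (fun _ => a) = INR n * a.
Proof. induction n; simpl rsum. simpl; ring. rewrite IHn, S_INR. ring. Qed.

Lemma csum_dec U V f : csum (U * V) f = csum U (fun u => csum V (fun v => f (u + U * v)%nat)).
Proof. induction V.
  - rewrite Nat.mul_0_r. simpl. rewrite csum_const. apply injective_projections; simpl; ring.
  - replace (U * Sc V)%nat with (U * V + U)%nat by lia. rewrite csum_app, IHV.
    simpl csum. rewrite csum_plus. f_equal. apply csum_ext_lt. intros i _. f_equal. lia. Qed.
Lemma rsum_dec U V f : rsum (U * V) f = rsum U (fun u => rsum V (fun v => f (u + U * v)%nat)).
Proof. induction V.
  - rewrite Nat.mul_0_r. simpl. rewrite rsum_const. simpl; ring.
  - replace (U * Sc V)%nat with (U * V + U)%nat by lia. rewrite rsum_app, IHV.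
    simpl rsum. rewrite rsum_plus. f_equal. apply rsum_ext_lt. intros i _. f_equal. lia. Qed.

Lemma csum_shift n f : csum n (fun i => f (Sc i)) = Cminus (Cplus (csum n f) (f n)) (f O).
Proof. rewrite <- (Cplus_0_r (csum n (fun i => f (Sc i)))) at 1. 
  assert (H := csum_first n f). simpl in H. rewrite H.
  apply injective_projections; simpl; ring. Qed.
Lemma rsum_shift n f : rsum n (fun i => f (Sc i)) = rsum n f + f n - f O.
Proof. assert (H := rsum_first n f). simpl in H. lra. Qed.

Lemma sum_n_m_csum q f : sum_n_m (G := C_AbelianMonoid) f 1 q = csum q (fun i => f (Sc i)).
Proof. induction q. rewrite sum_n_m_zero by lia. reflexivity.
  rewrite sum_n_Sm by lia. rewrite IHq. reflexivity. Qed.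
Lemma sum_n_m_rsum q f : sum_n_m (G := R_AbelianMonoid) f 1 q = rsum q (fun i => f (Sc i)).
Proof. induction q. rewrite sum_n_m_zero by lia. reflexivity.
  rewrite sum_n_Sm by lia. rewrite IHq. reflexivity. Qed.
Lemma sum_n_rsum n f : sum_n (G := R_AbelianMonoid) f n = rsum (Sc n) f.
Proof. induction n. rewrite sum_O. simpl rsum. symmetry. apply Rplus_0_l.
  unfold sum_n in *. rewrite sum_n_Sm by lia. rewrite IHn. reflexivity. Qed.
Lemma sum_n_csum n f : sum_n (G := C_AbelianMonoid) f n = csum (Sc n) f.
Proof. induction n. rewrite sum_O. simpl. apply injective_projections; simpl; ring.
  unfold sum_n in *. rewrite sum_n_Sm by lia. rewrite IHn. reflexivity. Qed.

End SecA.
Section SecB.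
Local Open Scope R_scope.
Local Notation Sc := Datatypes.S.

Lemma e_add x y : e (x + y) = Cmult (e x) (e y).
Proof. unfold e. apply injective_projections; simpl;
  replace (2 * PI * (x + y)) with (2*PI*x + 2*PI*y) by ring;
  [rewrite cos_plus | rewrite sin_plus]; ring. Qed.

Lemma e_nat n : e (INR n) = RtoC 1.
Proof. unfold e. apply injective_projections; simpl.
  - replace (2 * PI * INR n) with (0 + 2 * INR n * PI) by ring. rewrite cos_period. apply cos_0.
  - replace (2 * PI * INR n) with (0 + 2 * INR n * PI) by ring. rewrite sin_period. apply sin_0. Qed.

Lemma e_per x n : e (x + INR n) = e x.
Proof. rewrite e_add, e_nat. apply injective_projections; simpl; ring. Qed.

Lemma e_ne1 x : 0 < x < 1 -> e x <> RtoC 1.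
Proof. intros Hx H. assert (H1 : cos (2 * PI * x) = 1).
  { change (fst (e x) = fst (RtoC 1)). rewrite H. reflexivity. }
  replace (2 * PI * x) with (2 * (PI * x)) in H1 by ring.
  rewrite cos_2a_sin in H1.
  assert (0 < sin (PI * x)). { apply sin_gt_0; pose proof PI_RGT_0; nra. }
  nra. Qed.

Lemma geo_sum (a V : nat) : (0 < V)%nat -> (a mod V <> 0)%nat ->
  csum V (fun v => e (INR (a * v) / INR V)) = RtoC 0.
Proof. intros HV Ha.
  set (f := fun v => e (INR (a * v) / INR V)).
  set (z := e (INR a / INR V)).
  assert (HVr : INR V <> 0) by (apply not_0_INR; lia).
  assert (Hz : z <> RtoC 1).
  { unfold z. rewrite (Nat.div_mod_eq a V). rewrite plus_INR, mult_INR.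
    replace ((INR V * INR (a / V) + INR (a mod V)) / INR V) with
      (INR (a mod V) / INR V + INR (a / V)) by (field; auto).
    rewrite e_per. apply e_ne1. split.
    - apply Rdiv_lt_0_compat. apply lt_0_INR; lia. apply lt_0_INR; lia.
    - apply Rmult_lt_reg_r with (INR V). apply lt_0_INR; lia.
      unfold Rdiv. rewrite Rmult_assoc, Rinv_l, Rmult_1_r by auto. rewrite Rmult_1_l.
      apply lt_INR. apply Nat.mod_upper_bound. lia. }
  assert (Hs : Cmult z (csum V f) = csum V f).
  { rewrite csum_mult_l.
    transitivity (csum V (fun i => f (Sc i))).
    - apply csum_ext_lt. intros i _. unfold z, f. rewrite <- e_add. f_equal.
      rewrite !mult_INR, S_INR. field. auto.
    - rewrite csum_shift. unfold f. rewrite Nat.mul_0_r. simpl INR.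
      replace (INR (a * V) / INR V) with (0 + INR a) by (rewrite mult_INR; field; auto).
      rewrite e_per. unfold Rdiv. rewrite Rmult_0_l. 
      apply injective_projections; simpl; ring. }
  assert (Hm : Cmult (Cminus z (RtoC 1)) (csum V f) = RtoC 0).
  { rewrite <- (Cplus_0_r (RtoC 0)). 
    replace (Cmult (Cminus z (RtoC 1)) (csum V f)) with
      (Cminus (Cmult z (csum V f)) (csum V f)) by ring.
    rewrite Hs. ring. }
  assert (Hw : Cminus z (RtoC 1) <> RtoC 0).
  { intros Hw. apply Hz. replace z with (Cplus (Cminus z (RtoC 1)) (RtoC 1)) by ring.
    rewrite Hw. ring. }
  replace (csum V f) with (Cmult (Cinv (Cminus z (RtoC 1))) (Cmult (Cminus z (RtoC 1)) (csum V f)))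
    by (field; auto).
  rewrite Hm. ring. Qed.

Lemma geo_sum0 (a V : nat) : (0 < V)%nat -> (a mod V = 0)%nat ->
  csum V (fun v => e (INR (a * v) / INR V)) = RtoC (INR V).
Proof. intros HV Ha.
  assert (HVr : INR V <> 0) by (apply not_0_INR; lia).
  rewrite (csum_ext_lt _ _ (fun _ => RtoC 1)).
  - rewrite csum_const. apply injective_projections; simpl; ring.
  - intros i _. rewrite (Nat.div_mod_eq a V), Ha, Nat.add_0_r.
    replace (INR (V * (a / V) * i) / INR V) with (INR (a / V * i)).
    apply e_nat. rewrite !mult_INR. field. auto. Qed.

Definition Sn (q c : nat) : C := csum q (fun m => e (INR c * INR m ^ 3 / INR q)).

Lemma S_Sn q c : (1 <= q)%nat -> S q (Z.of_nat c) = Sn q c.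
Proof. intros Hq. unfold S, Sn. rewrite sum_n_m_csum, <- INR_IZR_INZ.
  rewrite (csum_shift q (fun m => e (INR c * INR m ^ 3 / INR q))).
  assert (HVr : INR q <> 0) by (apply not_0_INR; lia).
  replace (INR c * INR q ^ 3 / INR q) with (0 + INR (c * q * q))
    by (rewrite !mult_INR; field; auto).
  rewrite e_per. simpl INR. replace (INR c * 0 ^ 3 / INR q) with 0 by (field; auto).
  apply injective_projections; simpl; ring. Qed.

Lemma Sn_per q c t : (1 <= q)%nat -> Sn q (c + q * t) = Sn q c.
Proof. intros Hq. unfold Sn. apply csum_ext_lt. intros m _.
  assert (HVr : INR q <> 0) by (apply not_0_INR; lia).
  replace (INR (c + q * t) * INR m ^ 3 / INR q) with
    (INR c * INR m ^ 3 / INR q + INR (t * m * m * m)).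
  apply e_per. rewrite !plus_INR, !mult_INR. field. auto. Qed.

End SecB.
Section SecC.
Local Open Scope R_scope.
Local Notation Sc := Datatypes.S.

Lemma prime_ge2 p : prime (Z.of_nat p) -> (2 <= p)%nat.
Proof. intros H. apply prime_ge_2 in H. lia. Qed.

Lemma mod0_Zdiv p a : (0 < p)%nat -> ((a mod p = 0)%nat <-> (Z.of_nat p | Z.of_nat a)%Z).
Proof. intros Hp. rewrite <- Z.mod_divide by lia. rewrite <- Nat2Z.inj_mod. lia. Qed.

Lemma prime_mult_mod p a b : prime (Z.of_nat p) -> ((a * b) mod p = 0)%nat ->
  (a mod p = 0)%nat \/ (b mod p = 0)%nat.
Proof. intros Hp H. pose proof (prime_ge2 _ Hp).
  rewrite !mod0_Zdiv by lia. rewrite mod0_Zdiv in H by lia. rewrite Nat2Z.inj_mul in H.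
  apply prime_mult; auto. Qed.

Lemma gcd_pow p c j : prime (Z.of_nat p) -> (1 <= j)%nat ->
  (Nat.gcd c (p ^ j) =? 1)%nat = negb (c mod p =? 0)%nat.
Proof. intros Hp Hj. pose proof (prime_ge2 _ Hp).
  destruct (c mod p =? 0)%nat eqn:E; simpl.
  - apply Nat.eqb_eq in E. apply Nat.eqb_neq. intros Hg.
    assert (Hd : Nat.divide p (Nat.gcd c (p ^ j))).
    { apply Nat.gcd_greatest. apply Nat.Lcm0.mod_divide; lia.
      replace j with (Sc (j - 1)) by lia. simpl. apply Nat.divide_mul_l. apply Nat.divide_refl. }
    rewrite Hg in Hd. apply Nat.divide_1_r in Hd. lia.
  - apply Nat.eqb_neq in E. apply Nat.eqb_eq.
    assert (Hr : rel_prime (Z.of_nat c) (Z.of_nat p ^ Z.of_nat j)).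
    { apply Zpow_facts.rel_prime_Zpower_r. lia. apply rel_prime_sym. apply prime_rel_prime; auto.
      rewrite <- mod0_Zdiv; lia. }
    set (g := Nat.gcd c (p ^ j)).
    assert (Hg1 : Nat.divide g c) by apply Nat.gcd_divide_l.
    assert (Hg2 : Nat.divide g (p ^ j)) by apply Nat.gcd_divide_r.
    destruct Hg1 as [k1 Hk1]. destruct Hg2 as [k2 Hk2].
    destruct Hr as [_ _ Hr]. specialize (Hr (Z.of_nat g)).
    assert (Hz : (Z.of_nat g | 1)%Z).
    { apply Hr. exists (Z.of_nat k1). lia.
      exists (Z.of_nat k2). rewrite <- Nat2Z.inj_pow. lia. }
    apply Z.divide_1_r_nonneg in Hz; lia. Qed.

Lemma key_id (c u v U V q al be : nat) : q = (U * V)%nat -> (0 < U)%nat -> (0 < V)%nat ->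
  (3 * U * U = q * al)%nat -> (U * U * U = q * be)%nat ->
  e (INR c * INR (u + U * v) ^ 3 / INR q) =
  Cmult (e (INR c * INR u ^ 3 / INR q)) (e (INR (c * 3 * u * u * v) / INR V)).
Proof. intros Hq HU HV Ha Hb. subst q.
  assert (HUr : INR U <> 0) by (apply not_0_INR; lia).
  assert (HVr : INR V <> 0) by (apply not_0_INR; lia).
  apply (f_equal INR) in Ha. apply (f_equal INR) in Hb. rewrite !mult_INR in Ha, Hb.
  simpl INR in Ha.
  assert (Ha' : INR al = (1+1+1) * INR U * INR U / (INR U * INR V)) by (rewrite Ha; field; auto).
  assert (Hb' : INR be = INR U * INR U * INR U / (INR U * INR V)) by (rewrite Hb; field; auto).
  rewrite <- e_add, <- (e_per (INR c * INR u ^ 3 / INR (U * V) + INR (c * 3 * u * u * v) / INR V) (c * (u * v * v * al + v * v * v * be))). f_equal.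
  rewrite !mult_INR, !plus_INR, !mult_INR, Ha', Hb'. simpl INR. field. auto. Qed.

Lemma csum_filter p W h : (0 < p)%nat ->
  csum (p * W) (fun u => if (u mod p =? 0)%nat then h u else RtoC 0) = csum W (fun w => h (p * w)%nat).
Proof. intros Hp. rewrite csum_dec. replace p with (Sc (p - 1)) at 1 by lia.
  rewrite csum_first. rewrite (csum_ext_lt (p-1) _ (fun _ => RtoC 0)).
  - rewrite csum_const. 
    replace (Cplus _ (Cmult _ (RtoC 0))) with (csum W (fun v => if ((0 + p * v) mod p =? 0)%nat then h (0 + p * v)%nat else RtoC 0)) by ring.
    apply csum_ext_lt. intros w _. rewrite Nat.add_0_l.
    replace ((p * w) mod p)%nat with 0%nat. reflexivity. rewrite Nat.mul_comm, Nat.Div0.mod_mul. auto.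
  - intros i Hi. rewrite (csum_ext_lt _ _ (fun _ => RtoC 0)). rewrite csum_const. ring.
    intros w _. replace ((Sc i + p * w) mod p)%nat with (Sc i).
    replace (Sc i =? 0)%nat with false by reflexivity. auto.
    rewrite (Nat.mul_comm p w), Nat.Div0.mod_add. rewrite Nat.mod_small; lia. Qed.

Lemma dec_main p U V W q c al be : q = (U * V)%nat -> U = (p * W)%nat -> (0 < V)%nat -> (0 < W)%nat ->
  (0 < p)%nat -> (3 * U * U = q * al)%nat -> (U * U * U = q * be)%nat ->
  (forall u, ((c * 3 * u * u) mod V = 0)%nat <-> (u mod p = 0)%nat) ->
  Sn q c = Cmult (RtoC (INR V)) (csum W (fun w => e (INR c * INR (p * w) ^ 3 / INR q))).
Proof. intros Hq HU HV HW Hp Ha Hb Hc. unfold Sn.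
  assert (HU0 : (0 < U)%nat) by (subst; lia).
  rewrite Hq at 1. rewrite csum_dec.
  rewrite (csum_ext_lt U _ (fun u => if (u mod p =? 0)%nat then
      Cmult (RtoC (INR V)) (e (INR c * INR u ^ 3 / INR q)) else RtoC 0)).
  - rewrite HU at 1. rewrite csum_filter by auto. rewrite csum_mult_l. reflexivity.
  - intros u _. rewrite (csum_ext_lt V _ (fun v => Cmult (e (INR c * INR u ^ 3 / INR q))
         (e (INR (c * 3 * u * u * v) / INR V)))).
    2: { intros v _. apply key_id with al be; auto. }
    rewrite <- csum_mult_l.
    destruct (u mod p =? 0)%nat eqn:E.
    + apply Nat.eqb_eq, Hc in E. rewrite geo_sum0 by auto. ring.
    + apply Nat.eqb_neq in E. rewrite <- Hc in E. rewrite geo_sum by auto. ring. Qed.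

End SecC.
Section SecD.
Local Open Scope R_scope.
Local Notation Sc := Datatypes.S.

Lemma three_mod p : prime (Z.of_nat p) -> p <> 3%nat -> (3 mod p <> 0)%nat.
Proof. intros Hp H3 H. pose proof (prime_ge2 _ Hp) as Hp2.
  apply Nat.Lcm0.mod_divide in H. destruct H as [k Hk].
  destruct k as [|[|k]]; lia. Qed.

Lemma cond1 p c u : prime (Z.of_nat p) -> p <> 3%nat -> (c mod p <> 0)%nat ->
  ((c * 3 * u * u) mod p = 0)%nat <-> (u mod p = 0)%nat.
Proof. intros Hp H3 Hc. pose proof (prime_ge2 _ Hp) as Hp2. split.
  - intros H. apply prime_mult_mod in H; auto. destruct H as [H|H]; auto.
    apply prime_mult_mod in H; auto. destruct H as [H|H]; auto.
    apply prime_mult_mod in H; auto. destruct H as [H|H]; [contradiction|].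
    exfalso. apply (three_mod p); auto.
  - intros H. apply Nat.Lcm0.mod_divide in H. destruct H as [k Hk]. subst u.
    replace (c * 3 * (k * p) * (k * p))%nat with ((c * 3 * k * k * p) * p)%nat by ring.
    apply Nat.Div0.mod_mul. Qed.

Lemma cond2 p c u : prime (Z.of_nat p) -> (c mod p <> 0)%nat ->
  ((c * 3 * u * u) mod (p * p) = 0)%nat <-> (u mod p = 0)%nat.
Proof. intros Hp Hc. pose proof (prime_ge2 _ Hp) as Hp2. split.
  - intros H. apply Nat.Lcm0.mod_divide in H. destruct H as [k Hk].
    destruct (Nat.eq_dec p 3) as [E|E].
    + subst p. assert (Hm : ((c * (u * u)) mod 3 = 0)%nat).
      { apply Nat.Lcm0.mod_divide. exists k. lia. }
      apply prime_mult_mod in Hm; auto. destruct Hm as [Hm|Hm]; [contradiction|].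
      apply prime_mult_mod in Hm; auto. tauto.
    + apply (cond1 p c u); auto. apply Nat.Lcm0.mod_divide. exists (k * p)%nat. lia.
  - intros H. apply Nat.Lcm0.mod_divide in H. destruct H as [k Hk]. subst u.
    replace (c * 3 * (k * p) * (k * p))%nat with ((c * 3 * k * k) * (p * p))%nat by ring.
    apply Nat.Div0.mod_mul. Qed.

Lemma pow_pos' p i : (0 < p)%nat -> (0 < p ^ i)%nat.
Proof. intros. apply Nat.neq_0_lt_0. apply Nat.pow_nonzero. lia. Qed.

Lemma Sn_red p c i : prime (Z.of_nat p) -> (c mod p <> 0)%nat -> (p = 3%nat \/ (1 <= i)%nat) ->
  Sn (p ^ (i + 3)) c = Cmult (RtoC (INR (p * p))) (Sn (p ^ i) c).
Proof. intros Hp Hc Hi. pose proof (prime_ge2 _ Hp) as Hp2.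
  assert (Hpi := pow_pos' p i ltac:(lia)).
  assert (Hal : exists al, (3 * p ^ (i + 1) * p ^ (i + 1) = p ^ (i + 3) * al)%nat).
  { destruct Hi as [E|E].
    - subst p. exists (3 ^ i)%nat. rewrite !Nat.pow_add_r. simpl. ring.
    - exists (3 * p ^ (i - 1))%nat. replace i with (Sc (i - 1)) at 1 2 3 by lia.
      rewrite !Nat.pow_add_r. simpl. ring. }
  destruct Hal as [al Hal].
  rewrite (dec_main p (p ^ (i + 1)) (p * p) (p ^ i) (p ^ (i + 3)) c al (p ^ (2 * i))); auto.
  - f_equal. unfold Sn. apply csum_ext_lt. intros w _. f_equal.
    assert (Hr : INR (p ^ i) <> 0) by (apply not_0_INR; lia).
    assert (Hr' : INR p <> 0) by (apply not_0_INR; lia).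
    rewrite Nat.pow_add_r, !mult_INR, (pow_INR p 3). simpl. field. split; auto.
  - rewrite !Nat.pow_add_r. simpl. ring.
  - rewrite Nat.pow_add_r. simpl. ring.
  - lia.
  - lia.
  - replace (2 * i)%nat with (i + i)%nat by lia. rewrite !Nat.pow_add_r. simpl. ring.
  - intros u. apply cond2; auto. Qed.

Lemma Sn_one c : Sn 1 c = RtoC 1.
Proof. unfold Sn. simpl csum. replace (INR c * (0 * (0 * (0 * 1))) / 1) with (INR 0) by (simpl; field).
  rewrite e_nat. apply injective_projections; simpl; ring. Qed.

Lemma Sn_p2 p c : prime (Z.of_nat p) -> p <> 3%nat -> (c mod p <> 0)%nat ->
  Sn (p ^ 2) c = RtoC (INR p).
Proof. intros Hp H3 Hc. pose proof (prime_ge2 _ Hp) as Hp2.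
  rewrite (dec_main p p p 1 (p ^ 2) c 3 p); auto; try (simpl; lia).
  - simpl csum. rewrite Nat.mul_0_r. simpl INR.
    replace (INR c * (0 * (0 * (0 * 1))) / INR (p * (p * 1))) with (INR 0) by (simpl; unfold Rdiv; ring).
    rewrite e_nat. apply injective_projections; simpl; ring.
  - intros u. apply cond1; auto. Qed.

Lemma Sn_p3 p c : prime (Z.of_nat p) -> (c mod p <> 0)%nat ->
  Sn (p ^ 3) c = RtoC (INR (p * p)).
Proof. intros Hp Hc. pose proof (prime_ge2 _ Hp) as Hp2.
  destruct (Nat.eq_dec p 3) as [E|E].
  - change (p ^ 3)%nat with (p ^ (0 + 3))%nat. rewrite (Sn_red p c 0) by auto. simpl (p ^ 0)%nat. rewrite Sn_one.
    apply injective_projections; simpl; ring.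
  - rewrite (dec_main p (p * p) p p (p ^ 3) c (3 * p) (p * p * p)); auto; try (simpl; lia).
    + rewrite (csum_ext_lt _ _ (fun _ => RtoC 1)).
      * rewrite csum_const, mult_INR. apply injective_projections; simpl; ring.
      * intros w _. replace (INR c * INR (p * w) ^ 3 / INR (p ^ 3)) with (INR (c * w * w * w)).
        apply e_nat. assert (INR p <> 0) by (apply not_0_INR; lia).
        rewrite pow_INR, !mult_INR. field. auto.
    + intros u. apply cond1; auto. Qed.

Lemma Sn_3 c : (c mod 3 <> 0)%nat -> Sn 3 c = RtoC 0.
Proof. intros Hc. rewrite <- (geo_sum c 3) by lia. unfold Sn. apply csum_ext_lt.
  intros m Hm. destruct m as [|[|[|m]]]; try lia; simpl INR.
  - rewrite mult_INR. f_equal. simpl. field.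
  - rewrite mult_INR. f_equal. simpl. field.
  - replace (INR c * (1 + 1) ^ 3 / (1 + 1 + 1)) with (INR (c * 2) / (1+1+1) + INR (2 * c)).
    apply e_per. rewrite !mult_INR. simpl. field. Qed.

End SecD.
Section SecE.
Local Open Scope R_scope.
Local Notation Sc := Datatypes.S.

Definition Bq (p q : nat) : R :=
  rsum q (fun c => if (c mod p =? 0)%nat then 0 else Cmod (Sn q c) ^ 6).

Lemma T_gen q : (1 <= q)%nat ->
  T q = / INR q ^ 7 * rsum q (fun c => if (Nat.gcd c q =? 1)%nat then Cmod (Sn q c) ^ 6 else 0).
Proof. intros Hq. unfold T. f_equal. rewrite sum_n_m_rsum.
  set (F := fun c => if (Nat.gcd c q =? 1)%nat then Cmod (S q (Z.of_nat c)) ^ 6 else 0).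
  transitivity (rsum q (fun i => F (Sc i))). reflexivity. rewrite rsum_shift.
  assert (HF : F q = F 0%nat).
  { unfold F. rewrite Nat.gcd_diag, Nat.gcd_0_l. rewrite !S_Sn by auto.
    rewrite <- (Sn_per q 0 1) by auto. rewrite Nat.add_0_l, Nat.mul_1_r. reflexivity. }
  rewrite HF. replace (rsum q F + F 0%nat - F 0%nat) with (rsum q F) by ring.
  apply rsum_ext_lt. intros i _. unfold F. rewrite S_Sn by auto. reflexivity. Qed.

Lemma T_B p j : prime (Z.of_nat p) -> (1 <= j)%nat -> T (p ^ j) = / INR (p ^ j) ^ 7 * Bq p (p ^ j).
Proof. intros Hp Hj. pose proof (prime_ge2 _ Hp).
  rewrite T_gen by (apply pow_pos'; lia). f_equal. unfold Bq. apply rsum_ext_lt.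
  intros i _. rewrite gcd_pow by auto. destruct (i mod p =? 0)%nat; reflexivity. Qed.

Lemma T_1 : T 1 = 1.
Proof. rewrite T_gen by lia. simpl rsum. rewrite Sn_one, Cmod_1. simpl. field. Qed.

Lemma rsum_per p Q N f : (0 < p)%nat -> (Q mod p = 0)%nat -> (forall r t, f (r + Q * t)%nat = f r) ->
  rsum (Q * N) (fun c => if (c mod p =? 0)%nat then 0 else f c) =
  INR N * rsum Q (fun c => if (c mod p =? 0)%nat then 0 else f c).
Proof. intros Hp HQ Hf. rewrite rsum_dec, rsum_mult_l. apply rsum_ext_lt. intros r _.
  rewrite (rsum_ext_lt _ _ (fun _ => if (r mod p =? 0)%nat then 0 else f r)).
  - apply rsum_const.
  - intros t _. rewrite Hf. apply Nat.Lcm0.mod_divide in HQ. destruct HQ as [k Hk]. subst Q.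
    replace (r + k * p * t)%nat with (r + (k * t) * p)%nat by ring. rewrite Nat.Div0.mod_add.
    reflexivity. Qed.

Lemma count_units p K : (0 < p)%nat ->
  rsum p (fun c => if (c mod p =? 0)%nat then 0 else K) = (INR p - 1) * K.
Proof. intros Hp. replace p with (Sc (p - 1)) at 1 by lia. rewrite rsum_first.
  rewrite Nat.Div0.mod_0_l. simpl (0 =? 0)%nat.
  rewrite (rsum_ext_lt _ _ (fun _ => K)).
  - rewrite rsum_const, minus_INR by lia. simpl. ring.
  - intros i Hi. rewrite Nat.mod_small by lia. reflexivity. Qed.

Lemma Cmod_scale6 x z : 0 <= x -> Cmod (Cmult (RtoC x) z) ^ 6 = x ^ 6 * Cmod z ^ 6.
Proof. intros Hx. rewrite Cmod_mult, Cmod_R, Rabs_pos_eq by auto. ring. Qed.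

Lemma B_red p i : prime (Z.of_nat p) -> (1 <= i)%nat -> Bq p (p ^ (i + 3)) = INR p ^ 15 * Bq p (p ^ i).
Proof. intros Hp Hi. pose proof (prime_ge2 _ Hp). unfold Bq.
  rewrite (rsum_ext_lt _ _ (fun c => if (c mod p =? 0)%nat then 0 else INR p ^ 12 * Cmod (Sn (p ^ i) c) ^ 6)).
  - rewrite (Nat.pow_add_r p i 3). rewrite rsum_per; auto; try lia.
    + rewrite (rsum_ext_lt (p ^ i) _ (fun c => INR p ^ 12 * (if (c mod p =? 0)%nat then 0 else Cmod (Sn (p ^ i) c) ^ 6))).
      * rewrite <- rsum_mult_l, pow_INR. ring.
      * intros c _. destruct (c mod p =? 0)%nat; ring.
    + replace i with (Sc (i - 1)) by lia. simpl. rewrite Nat.mul_comm. apply Nat.Div0.mod_mul.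
    + intros r t. rewrite Sn_per; auto. apply pow_pos'; lia.
  - intros c _. destruct (c mod p =? 0)%nat eqn:E; auto. apply Nat.eqb_neq in E.
    rewrite Sn_red by auto. rewrite Cmod_scale6 by apply pos_INR. rewrite mult_INR. ring.
Qed.

Lemma B_3 p : prime (Z.of_nat p) -> Bq p (p ^ 3) = (INR p - 1) * INR p ^ 14.
Proof. intros Hp. pose proof (prime_ge2 _ Hp). unfold Bq.
  rewrite (rsum_ext_lt _ _ (fun c => if (c mod p =? 0)%nat then 0 else INR p ^ 12)).
  - replace (p ^ 3)%nat with (p * p ^ 2)%nat by (simpl; ring).
    rewrite rsum_per; try lia.
    + rewrite count_units by lia. rewrite pow_INR. ring.
    + apply Nat.Div0.mod_same.
    + auto.
  - intros c _. destruct (c mod p =? 0)%nat eqn:E; auto. apply Nat.eqb_neq in E.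
    rewrite Sn_p3 by auto. rewrite Cmod_R, Rabs_pos_eq by apply pos_INR. rewrite mult_INR. ring. Qed.

Lemma B_2 p : prime (Z.of_nat p) -> p <> 3%nat -> Bq p (p ^ 2) = (INR p - 1) * INR p ^ 7.
Proof. intros Hp H3. pose proof (prime_ge2 _ Hp). unfold Bq.
  rewrite (rsum_ext_lt _ _ (fun c => if (c mod p =? 0)%nat then 0 else INR p ^ 6)).
  - replace (p ^ 2)%nat with (p * p)%nat by (simpl; ring).
    rewrite rsum_per; try lia.
    + rewrite count_units by lia. ring.
    + apply Nat.Div0.mod_same.
    + auto.
  - intros c _. destruct (c mod p =? 0)%nat eqn:E; auto. apply Nat.eqb_neq in E.
    rewrite Sn_p2 by auto. rewrite Cmod_R, Rabs_pos_eq by apply pos_INR. ring. Qed.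

Lemma rsum_first' n f : (1 <= n)%nat -> rsum n f = f O + rsum (n - 1) (fun i => f (Sc i)).
Proof. intros H. destruct n. lia. rewrite rsum_first. simpl. rewrite Nat.sub_0_r. reflexivity. Qed.

Lemma B_1 p : prime (Z.of_nat p) ->
  sum_n_m (G := R_AbelianMonoid) (fun c : nat => (Cmod (S p (Z.of_nat c)) ^ 6)%R) 1 (p - 1) = Bq p p.
Proof. intros Hp. pose proof (prime_ge2 _ Hp). rewrite sum_n_m_rsum. unfold Bq.
  rewrite (rsum_first' p) by lia.
  rewrite Nat.Div0.mod_0_l. simpl (0 =? 0)%nat. rewrite Rplus_0_l.
  apply rsum_ext_lt. intros i Hi. rewrite Nat.mod_small by lia. simpl (Sc i =? 0)%nat.
  rewrite S_Sn by lia. reflexivity. Qed.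

Lemma B_33 : Bq 3 3 = 0.
Proof. unfold Bq. rewrite (rsum_ext_lt _ _ (fun _ => 0)).
  - rewrite rsum_const. ring.
  - intros c _. destruct (c mod 3 =? 0)%nat eqn:E; auto. apply Nat.eqb_neq in E.
    rewrite Sn_3 by auto. rewrite Cmod_0. ring. Qed.

End SecE.
Section SecF.
Local Open Scope R_scope.
Local Notation Sc := Datatypes.S.

Lemma abs_bound (a : nat -> R) (r : R) : (forall k, 0 <= a k) -> 0 <= r < 1 ->
  (forall k, a (3 + k)%nat = r * a k) ->
  forall n, rsum n a <= (a 0%nat + a 1%nat + a 2%nat) / (1 - r).
Proof. intros Ha Hr Hrec.
  assert (Hpos : forall n, 0 <= rsum n a).
  { induction n; simpl; auto. lra. specialize (Ha n). lra. }
  set (B := (a 0%nat + a 1%nat + a 2%nat) / (1 - r)).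
  assert (HB : a 0%nat + a 1%nat + a 2%nat <= B).
  { unfold B. apply Rmult_le_reg_r with (1 - r). lra. unfold Rdiv. rewrite Rmult_assoc, Rinv_l by lra.
    pose proof (Ha 0%nat); pose proof (Ha 1%nat); pose proof (Ha 2%nat). nra. }
  assert (HB2 : (a 0%nat + a 1%nat + a 2%nat) + r * B = B).
  { unfold B. field. lra. }
  intros n. induction n as [n IH] using lt_wf_ind.
  destruct (le_lt_dec n 3) as [Hn|Hn].
  - pose proof (Ha 0%nat); pose proof (Ha 1%nat); pose proof (Ha 2%nat).
    destruct n as [|[|[|[|n]]]]; simpl; try lra. lia.
  - replace n with (3 + (n - 3))%nat by lia. rewrite rsum_app.
    rewrite (rsum_ext_lt (n - 3) (fun i => a (3 + i)%nat) (fun i => r * a i)) by (intros; apply Hrec).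
    rewrite <- rsum_mult_l. simpl. specialize (IH (n - 3)%nat ltac:(lia)).
    assert (r * rsum (n - 3) a <= r * B) by (apply Rmult_le_compat_l; lra).
    lra.
Qed.

Lemma series_rec (t : nat -> C) (w : C) : Cmod w < 1 ->
  (forall k, t (3 + k)%nat = Cmult w (t k)) ->
  is_series t (Cdiv (Cplus (Cplus (t 0%nat) (t 1%nat)) (t 2%nat)) (Cminus (RtoC 1) w))
  /\ ex_series (fun k => Cmod (t k)).
Proof. intros Hw Hrec.
  assert (Hab : ex_series (fun k => Cmod (t k))).
  { assert (Hb := abs_bound (fun k => Cmod (t k)) (Cmod w) (fun k => Cmod_ge_0 _)
       (conj (Cmod_ge_0 _) Hw) (fun k => eq_trans (f_equal Cmod (Hrec k)) (Cmod_mult _ _))).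
    assert (He : ex_finite_lim_seq (sum_n (fun k => Cmod (t k)))).
    { apply ex_finite_lim_seq_incr with ((Cmod (t 0%nat) + Cmod (t 1%nat) + Cmod (t 2%nat)) / (1 - Cmod w)).
      - intros n. rewrite !sum_n_rsum. simpl rsum. pose proof (Cmod_ge_0 (t (Sc n))). 
        change (rsum n (fun k => Cmod (t k)) + Cmod (t n) <= rsum n (fun k => Cmod (t k)) + Cmod (t n) + Cmod (t (Sc n))). lra.
      - intros n. rewrite sum_n_rsum. apply Hb. }
    destruct He as [l Hl]. exists l. exact Hl. }
  split; auto.
  assert (Ht : ex_series t).
  { apply (ex_series_le (K := C_AbsRing) (V := C_CompleteNormedModule) t (fun k => Cmod (t k))); auto.
    intros n. apply Rle_refl. }
  destruct Ht as [L HL]. change C in L.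
  set (s := Cplus (Cplus (t 0%nat) (t 1%nat)) (t 2%nat)).
  assert (H3 : is_series (fun k => t (3 + k)%nat) (Cminus L s)).
  { apply is_series_incr_n. lia. simpl pred. rewrite sum_n_csum. simpl csum.
    replace (plus _ _) with L.
    exact HL. transitivity (Cplus (Cminus L s) (Cplus (Cplus (Cplus (RtoC 0) (t 0%nat)) (t 1%nat)) (t 2%nat))).
    unfold s. change (@eq C L (L - (t 0%nat + t 1%nat + t 2%nat) + (0 + t 0%nat + t 1%nat + t 2%nat))%C). ring. reflexivity. }
  assert (H4 : is_series (fun k => t (3 + k)%nat) (Cmult w L)).
  { apply is_series_ext with (fun k => scal w (t k)).
    intros n. rewrite Hrec. reflexivity. exact (is_series_scal (K := C_AbsRing) (V := C_NormedModule) w t L HL). }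
  assert (HE : Cminus L s = Cmult w L).
  { apply (filterlim_locally_unique (K:=C_AbsRing) (V:=C_NormedModule) (F:=eventually) (sum_n (fun k => t (3+k)%nat))).
    exact H3. exact H4. }
  assert (Hw1 : Cminus (RtoC 1) w <> RtoC 0).
  { intros E. assert (w = RtoC 1). { replace w with (Cminus (RtoC 1) (Cminus (RtoC 1) w)) by ring. rewrite E. ring. }
    subst w. rewrite Cmod_1 in Hw. lra. }
  replace (Cdiv s (Cminus (RtoC 1) w)) with L. auto.
  replace s with (Cmult L (Cminus (RtoC 1) w)).
  field. auto. replace s with (Cminus L (Cminus L s)) by ring. rewrite HE. ring. Qed.

End SecF.
Section SecG.
Local Open Scope R_scope.

Lemma cpow_add x a b : cpow x (Cplus a b) = Cmult (cpow x a) (cpow x b).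
Proof. unfold cpow. destruct a as [a1 a2], b as [b1 b2]. simpl.
  replace ((a1 + b1) * ln x) with (a1 * ln x + b1 * ln x) by ring.
  replace ((a2 + b2) * ln x) with (a2 * ln x + b2 * ln x) by ring.
  rewrite exp_plus, cos_plus, sin_plus. apply injective_projections; simpl; ring. Qed.

Lemma cpow_mulx x y z : 0 < x -> 0 < y -> cpow (x * y) z = Cmult (cpow x z) (cpow y z).
Proof. intros Hx Hy. unfold cpow. destruct z as [a b]. simpl. rewrite ln_mult by auto.
  replace (a * (ln x + ln y)) with (a * ln x + a * ln y) by ring.
  replace (b * (ln x + ln y)) with (b * ln x + b * ln y) by ring.
  rewrite exp_plus, cos_plus, sin_plus. apply injective_projections; simpl; ring. Qed.

Lemma cpow_nat x n : 0 < x -> cpow x (RtoC (INR n)) = RtoC (x ^ n).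
Proof. intros Hx. unfold cpow. simpl. rewrite Rmult_0_l, cos_0, sin_0.
  rewrite <- ln_pow by auto. rewrite exp_ln by (apply pow_lt; auto).
  apply injective_projections; simpl; ring. Qed.

Lemma cpow_1 z : cpow 1 z = RtoC 1.
Proof. unfold cpow. rewrite ln_1, !Rmult_0_r, exp_0, cos_0, sin_0.
  apply injective_projections; simpl; ring. Qed.

Lemma cpow_mod x z : Cmod (cpow x z) = exp (Re z * ln x).
Proof. unfold cpow. rewrite Cmod_mult, Cmod_R, Rabs_pos_eq by (left; apply exp_pos).
  unfold Cmod. simpl. rewrite !Rmult_1_r.
  replace (cos (Im z * ln x) * cos (Im z * ln x) + sin (Im z * ln x) * sin (Im z * ln x)) with 1.
  rewrite sqrt_1. ring. pose proof (sin2_cos2 (Im z * ln x)). unfold Rsqr in H. lra. Qed.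

Lemma cpow_ne0 x z : cpow x z <> RtoC 0.
Proof. intros H. assert (Cmod (cpow x z) = 0) by (rewrite H; apply Cmod_0).
  rewrite cpow_mod in H0. pose proof (exp_pos (Re z * ln x)). lra. Qed.

End SecG.
Section SecH.
Local Open Scope R_scope.
Local Notation Sc := Datatypes.S.

Lemma T_rec p k : prime (Z.of_nat p) -> (1 <= k)%nat ->
  T (p ^ (k + 3)) = / INR p ^ 6 * T (p ^ k).
Proof. intros Hp Hk. pose proof (prime_ge2 _ Hp).
  rewrite !T_B by (auto; lia). rewrite B_red by auto.
  assert (HP : INR p <> 0) by (apply not_0_INR; lia).
  assert (HPk : INR (p ^ k) <> 0) by (apply not_0_INR; apply Nat.pow_nonzero; lia).
  rewrite Nat.pow_add_r, mult_INR, (pow_INR p 3). field. auto. Qed.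

Lemma w_lt1 P s : 1 < P -> -2 < Re s ->
  Cmod (Cmult (RtoC (/ P ^ 6)) (Cinv (Cmult (Cmult (cpow P s) (cpow P s)) (cpow P s)))) < 1.
Proof. intros HP Hs.
  rewrite Cmod_mult. rewrite Cmod_inv by (apply Cmult_neq_0; [apply Cmult_neq_0|]; apply cpow_ne0).
  rewrite !Cmod_mult, !cpow_mod, Cmod_R.
  rewrite Rabs_pos_eq by (left; apply Rinv_0_lt_compat, pow_lt; lra).
  set (L := ln P). set (E := exp (Re s * L)).
  assert (HL : 0 < L) by (unfold L; rewrite <- ln_1; apply ln_increasing; lra).
  assert (Hx : exp (6 * L + 3 * (Re s * L)) = P ^ 6 * (E * E * E)).
  { replace (6 * L + 3 * (Re s * L)) with (L + L + L + L + L + L + Re s * L + Re s * L + Re s * L) by ring.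
    rewrite !exp_plus. unfold L at 1 2 3 4 5 6. rewrite exp_ln by lra. unfold E. simpl. ring. }
  assert (H1 : 1 < P ^ 6 * (E * E * E)).
  { rewrite <- Hx, <- exp_0. apply exp_increasing. nra. }
  assert (HE : 0 < E) by apply exp_pos.
  rewrite <- Rinv_mult. rewrite <- Rinv_1. apply Rinv_1_lt_contravar. lra. exact H1. Qed.

Lemma cpow_INRpow p k s : (1 <= p)%nat ->
  cpow (INR (p ^ (k + 3))) s = Cmult (cpow (INR (p ^ k)) s)
    (Cmult (Cmult (cpow (INR p) s) (cpow (INR p) s)) (cpow (INR p) s)).
Proof. intros Hp. assert (HP : 0 < INR p) by (apply lt_0_INR; lia).
  assert (HPk : 0 < INR (p ^ k)) by (apply lt_0_INR; apply pow_pos'; lia).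
  rewrite Nat.pow_add_r, mult_INR. simpl (p ^ 3)%nat. rewrite !mult_INR. simpl INR at 4.
  rewrite Rmult_1_r. rewrite cpow_mulx by (auto; repeat apply Rmult_lt_0_compat; auto).
  f_equal. rewrite cpow_mulx by (auto; repeat apply Rmult_lt_0_compat; auto).
  rewrite cpow_mulx by auto. ring. Qed.

Lemma general_series p s : prime (Z.of_nat p) -> -2 < Re s ->
  let term := fun k : nat => Cdiv (RtoC (T (p ^ k))) (cpow (INR (p ^ k)) s) in
  let Z := cpow (INR p) s in
  let w := Cmult (RtoC (/ INR p ^ 6)) (Cinv (Cmult (Cmult Z Z) Z)) in
  is_series term (Cplus (RtoC 1) (Cdiv (Cplus (Cplus (term 1%nat) (term 2%nat)) (term 3%nat)) (Cminus (RtoC 1) w)))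
  /\ ex_series (fun k => Cmod (term k)).
Proof. intros Hp Hs term Z w. pose proof (prime_ge2 _ Hp).
  assert (HP1 : 1 < INR p) by (replace 1 with (INR 1) by reflexivity; apply lt_INR; lia).
  assert (Hrec : forall k, term (Sc (3 + k)) = Cmult w (term (Sc k))).
  { intros k. unfold term. replace (Sc (3 + k)) with (Sc k + 3)%nat by lia.
    rewrite T_rec by (auto; lia). rewrite cpow_INRpow by lia. fold Z. unfold w.
    rewrite RtoC_mult, RtoC_inv by (apply pow_nonzero; lra).
    rewrite RtoC_pow. field. split; [apply cpow_ne0|]. split; [apply cpow_ne0|].
    intros E. injection E. lra. }
  destruct (series_rec (fun k => term (Sc k)) w) as [H1 H2].
  - apply w_lt1; auto.
  - exact Hrec.
  - split.
    + apply is_series_decr_1.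
      assert (Ht0 : term 0%nat = RtoC 1).
      { unfold term. simpl (p ^ 0)%nat. rewrite T_1. simpl INR. rewrite cpow_1. field. }
      rewrite Ht0. replace (plus _ _) with (Cdiv (Cplus (Cplus (term 1%nat) (term 2%nat)) (term 3%nat)) (Cminus (RtoC 1) w)).
      exact H1. transitivity (Cplus (Cplus (RtoC 1) (Cdiv (Cplus (Cplus (term 1%nat) (term 2%nat)) (term 3%nat)) (Cminus (RtoC 1) w))) (Copp (RtoC 1))).
      ring. reflexivity.
    + apply ex_series_incr_1. exact H2. Qed.

End SecH.
Section SecI.
Local Notation Sc := Datatypes.S.

Lemma cpow_ks x s k : 0 < x -> cpow x (Cmult (RtoC (INR k)) s) = Cpow (cpow x s) k.
Proof. intros Hx. induction k.
  - simpl INR. replace (Cmult (RtoC 0) s) with (RtoC (INR 0)) by (simpl; ring).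
    rewrite cpow_nat by auto. simpl. reflexivity.
  - rewrite S_INR, RtoC_plus.
    replace (Cmult (RtoC (INR k) + RtoC 1)%C s) with (Cplus s (Cmult (RtoC (INR k)) s)) by ring.
    rewrite cpow_add, IHk. reflexivity. Qed.

Lemma cpow_lin x s a b : 0 < x -> cpow x (Cplus (Cmult (RtoC (INR a)) s) (RtoC (INR b))) =
   Cmult (Cpow (cpow x s) a) (RtoC (x ^ b)).
Proof. intros Hx. rewrite cpow_add, cpow_nat, cpow_ks by auto. reflexivity. Qed.

Lemma cpow_pow x s k : 0 < x -> cpow (x ^ k) s = Cpow (cpow x s) k.
Proof. intros Hx. induction k. simpl. apply cpow_1.
  simpl. rewrite cpow_mulx, IHk; auto. apply pow_lt; auto. Qed.

Lemma RtoC_TB x y : x <> 0%R -> RtoC (/ x ^ 7 * y) = Cmult (Cinv (Cpow (RtoC x) 7)) (RtoC y).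
Proof. intros H. rewrite RtoC_mult, RtoC_inv, RtoC_pow; auto. apply pow_nonzero; auto. Qed.

Lemma part1 (s : C) (hs : (-2 < Re s)%R) :
  (forall p : nat, prime (Z.of_nat p) -> p <> 3%nat ->
     let P := INR p in
     let term := fun k : nat => (RtoC (T (p ^ k)) / cpow (INR (p ^ k)) s)%C in
     is_series term
       (/ (RtoC 1 - / cpow P (RtoC 3 * s + RtoC 6)) *
        (RtoC 1
         + / cpow P (s + RtoC 7) *
             RtoC (sum_n_m (G := R_AbelianMonoid)
                     (fun c : nat => (Cmod (S p (Z.of_nat c)) ^ 6)%R) 1 (p - 1))
         + RtoC (P - 1) / cpow P (RtoC 2 * s + RtoC 7)
         - / cpow P (RtoC 3 * s + RtoC 7)))%C
     /\ ex_series (fun k : nat => Cmod (term k))).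
Proof. intros p Hp H3 P term.
  destruct (general_series p s Hp hs) as [H1 H2]. split; [|exact H2].
  pose proof (prime_ge2 _ Hp).
  assert (HP0 : (0 < P)%R) by (apply lt_0_INR; lia).
  set (Z := cpow P s). 
  assert (HZ : Z <> RtoC 0) by apply cpow_ne0.
  assert (HPC : RtoC P <> RtoC 0) by (intros E; injection E; lra).
  assert (Hw := w_lt1 P s ltac:(unfold P; replace 1%R with (INR 1) by reflexivity; apply lt_INR; lia) hs).
  fold Z in Hw.
  set (w := Cmult (RtoC (/ P ^ 6)) (Cinv (Cmult (Cmult Z Z) Z))) in *.
  assert (Hw1 : Cminus (RtoC 1) w <> RtoC 0).
  { intros E. assert (w = RtoC 1). { replace w with (Cminus (RtoC 1) (Cminus (RtoC 1) w)) by ring. rewrite E. ring. }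
    rewrite H0, Cmod_1 in Hw. lra. }
  assert (E1 : term 1%nat = Cmult (Cmult (Cinv (Cpow (RtoC P) 7)) (RtoC (Bq p p))) (Cinv Z)).
  { unfold term. rewrite T_B by (auto; lia). rewrite Nat.pow_1_r. rewrite RtoC_TB by (apply not_0_INR; lia).
    fold P. fold Z. reflexivity. }
  assert (E2 : term 2%nat = Cmult (Cmult (Cinv (Cpow (RtoC (P ^ 2)) 7)) (RtoC ((P - 1) * P ^ 7))) (Cinv (Cpow Z 2))).
  { unfold term. rewrite T_B by (auto; lia). rewrite B_2 by auto. rewrite pow_INR. fold P.
    rewrite RtoC_TB by (apply pow_nonzero; apply not_0_INR; lia). rewrite cpow_pow by auto. fold Z.
    reflexivity. }
  assert (E3 : term 3%nat = Cmult (Cmult (Cinv (Cpow (RtoC (P ^ 3)) 7)) (RtoC ((P - 1) * P ^ 14))) (Cinv (Cpow Z 3))).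
  { unfold term. rewrite T_B by (auto; lia). rewrite B_3 by auto. rewrite pow_INR. fold P.
    rewrite RtoC_TB by (apply pow_nonzero; apply not_0_INR; lia). rewrite cpow_pow by auto. fold Z.
    reflexivity. }
  rewrite B_1 by auto.
  replace (RtoC 3) with (RtoC (INR 3)) by (f_equal; simpl; ring).
  replace (RtoC 2) with (RtoC (INR 2)) by (f_equal; simpl; ring).
  replace (RtoC 6) with (RtoC (INR 6)) by (f_equal; simpl; ring).
  replace (RtoC 7) with (RtoC (INR 7)) by (f_equal; simpl; ring).
  replace (s + RtoC (INR 7))%C with (Cplus (Cmult (RtoC (INR 1)) s) (RtoC (INR 7))) by (simpl; ring).
  rewrite !cpow_lin by auto. fold Z.
  match goal with |- is_series _ ?X => replace X with
     (Cplus (RtoC 1) (Cdiv (Cplus (Cplus (term 1%nat) (term 2%nat)) (term 3%nat)) (Cminus (RtoC 1) w))) end.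
  exact H1.
  rewrite E1, E2, E3. unfold w. rewrite !RtoC_mult, RtoC_minus, RtoC_inv, !RtoC_pow by (apply pow_nonzero; lra).
  assert (HD : Cminus (Cmult (Cpow Z 3) (Cpow (RtoC P) 6)) (RtoC 1) <> RtoC 0).
  { intros E. apply Hw1. unfold w. rewrite RtoC_inv, RtoC_pow by (apply pow_nonzero; lra).
    replace (Cminus (RtoC 1) (Cmult (Cinv (Cpow (RtoC P) 6)) (Cinv (Cmult (Cmult Z Z) Z))))
      with (Cdiv (Cminus (Cmult (Cpow Z 3) (Cpow (RtoC P) 6)) (RtoC 1)) (Cmult (Cpow Z 3) (Cpow (RtoC P) 6)))
      by (field; auto).
    rewrite E. field. auto. }
  field. split; [auto|]. split; [auto|]. exact HD.
Qed.

Lemma sum9 : sum_n_m (G := R_AbelianMonoid)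
  (fun c : nat => if Nat.eqb (Nat.gcd c 3) 1 then (Cmod (S 9 (Z.of_nat c)) ^ 6)%R else 0%R) 1 9 =
  sum_n_m (G := R_AbelianMonoid)
  (fun c : nat => if Nat.eqb (Nat.gcd c 9) 1 then (Cmod (S 9 (Z.of_nat c)) ^ 6)%R else 0%R) 1 9.
Proof. apply sum_n_m_ext_loc. intros c Hc.
  assert (E : Nat.eqb (Nat.gcd c 3) 1 = Nat.eqb (Nat.gcd c 9) 1).
  { do 10 (destruct c as [|c]; [first [lia | reflexivity]|]). lia. }
  rewrite E. reflexivity. Qed.

Lemma part2 (s : C) (hs : (-2 < Re s)%R) :
  (let term := fun k : nat => (RtoC (T (3 ^ k)) / cpow (INR (3 ^ k)) s)%C in
   is_series term
     (/ (RtoC 1 - / cpow 3 (RtoC 3 * s + RtoC 6)) *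
      (RtoC 1
       + / cpow 3 (RtoC 2 * s + RtoC 14) *
           RtoC (sum_n_m (G := R_AbelianMonoid)
                   (fun c : nat => if Nat.eqb (Nat.gcd c 3) 1
                                   then (Cmod (S 9 (Z.of_nat c)) ^ 6)%R else 0%R) 1 9)
       - / cpow 3 (RtoC 3 * s + RtoC 7)))%C
   /\ ex_series (fun k : nat => Cmod (term k))).
Proof. intros term.
  assert (Hp : prime (Z.of_nat 3)) by exact prime_3.
  destruct (general_series 3 s Hp hs) as [H1 H2]. split; [|exact H2].
  set (P := INR 3).
  assert (HP0 : (0 < P)%R) by (unfold P; simpl; lra).
  set (Z := cpow P s).
  assert (HZ : Z <> RtoC 0) by apply cpow_ne0.
  assert (HPC : RtoC P <> RtoC 0) by (intros E; injection E; lra).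
  assert (Hw := w_lt1 P s ltac:(unfold P; simpl; lra) hs).
  fold Z in Hw.
  set (w := Cmult (RtoC (/ P ^ 6)) (Cinv (Cmult (Cmult Z Z) Z))) in *.
  assert (Hw1 : Cminus (RtoC 1) w <> RtoC 0).
  { intros E. assert (w = RtoC 1). { replace w with (Cminus (RtoC 1) (Cminus (RtoC 1) w)) by ring. rewrite E. ring. }
    rewrite H, Cmod_1 in Hw. lra. }
  set (X := sum_n_m (G := R_AbelianMonoid)
                   (fun c : nat => if Nat.eqb (Nat.gcd c 3) 1
                                   then (Cmod (S 9 (Z.of_nat c)) ^ 6)%R else 0%R) 1 9).
  assert (E1 : term 1%nat = RtoC 0).
  { unfold term. rewrite T_B by (auto; lia). simpl (3 ^ 1)%nat. rewrite B_33, Rmult_0_r.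
    unfold Cdiv. ring. }
  assert (E2 : term 2%nat = Cmult (Cmult (Cinv (Cpow (RtoC (P ^ 2)) 7)) (RtoC X)) (Cinv (Cpow Z 2))).
  { unfold term. replace (T (3 ^ 2)) with (/ (P ^ 2) ^ 7 * X)%R.
    rewrite RtoC_TB by (apply pow_nonzero; lra). rewrite pow_INR, cpow_pow by auto. reflexivity.
    unfold X. rewrite sum9. unfold T. f_equal. f_equal. f_equal. unfold P. rewrite pow_INR. reflexivity. }
  assert (E3 : term 3%nat = Cmult (Cmult (Cinv (Cpow (RtoC (P ^ 3)) 7)) (RtoC ((P - 1) * P ^ 14))) (Cinv (Cpow Z 3))).
  { unfold term. rewrite T_B by (auto; lia). rewrite B_3 by auto. rewrite pow_INR. fold P.
    rewrite RtoC_TB by (apply pow_nonzero; lra). rewrite cpow_pow by auto. fold Z.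
    reflexivity. }
  assert (C3 : forall Y, cpow 3 Y = cpow P Y) by (intros; unfold P; f_equal; simpl; ring).
  rewrite !C3. fold X.
  replace (RtoC 3) with (RtoC (INR 3)) by (f_equal; simpl; ring).
  replace (RtoC 2) with (RtoC (INR 2)) by (f_equal; simpl; ring).
  replace (RtoC 6) with (RtoC (INR 6)) by (f_equal; simpl; ring).
  replace (RtoC 7) with (RtoC (INR 7)) by (f_equal; simpl; ring).
  replace (RtoC 14) with (RtoC (INR 14)) by (f_equal; simpl; ring).
  rewrite !cpow_lin by auto. fold Z.
  match goal with |- is_series _ ?X => replace X with
     (Cplus (RtoC 1) (Cdiv (Cplus (Cplus (term 1%nat) (term 2%nat)) (term 3%nat)) (Cminus (RtoC 1) w))) end.
  exact H1.
  assert (HD : Cminus (Cmult (Cpow Z 3) (Cpow (RtoC P) 6)) (RtoC 1) <> RtoC 0).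
  { intros E. apply Hw1. unfold w. rewrite RtoC_inv, RtoC_pow by (apply pow_nonzero; lra).
    replace (Cminus (RtoC 1) (Cmult (Cinv (Cpow (RtoC P) 6)) (Cinv (Cmult (Cmult Z Z) Z))))
      with (Cdiv (Cminus (Cmult (Cpow Z 3) (Cpow (RtoC P) 6)) (RtoC 1)) (Cmult (Cpow Z 3) (Cpow (RtoC P) 6)))
      by (field; auto).
    rewrite E. field. auto. }
  rewrite E1, E2, E3. unfold w. rewrite !RtoC_mult, RtoC_minus, RtoC_inv, !RtoC_pow by (apply pow_nonzero; lra).
  field. split; [auto|]. split; [auto|]. exact HD.
Qed.

End SecI.
Theorem lemma7 (s : C) (hs : (-2 < Re s)%R) :
  (forall p : nat, prime (Z.of_nat p) -> p <> 3%nat ->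
     let P := INR p in
     let term := fun k : nat => (RtoC (T (p ^ k)) / cpow (INR (p ^ k)) s)%C in
     is_series term
       (/ (RtoC 1 - / cpow P (RtoC 3 * s + RtoC 6)) *
        (RtoC 1
         + / cpow P (s + RtoC 7) *
             RtoC (sum_n_m (G := R_AbelianMonoid)
                     (fun c : nat => (Cmod (S p (Z.of_nat c)) ^ 6)%R) 1 (p - 1))
         + RtoC (P - 1) / cpow P (RtoC 2 * s + RtoC 7)
         - / cpow P (RtoC 3 * s + RtoC 7)))%C
     /\ ex_series (fun k : nat => Cmod (term k)))
  /\
  (let term := fun k : nat => (RtoC (T (3 ^ k)) / cpow (INR (3 ^ k)) s)%C in
   is_series term
     (/ (RtoC 1 - / cpow 3 (RtoC 3 * s + RtoC 6)) *
      (RtoC 1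
       + / cpow 3 (RtoC 2 * s + RtoC 14) *
           RtoC (sum_n_m (G := R_AbelianMonoid)
                   (fun c : nat => if Nat.eqb (Nat.gcd c 3) 1
                                   then (Cmod (S 9 (Z.of_nat c)) ^ 6)%R else 0%R) 1 9)
       - / cpow 3 (RtoC 3 * s + RtoC 7)))%C
   /\ ex_series (fun k : nat => Cmod (term k))).
Proof. split. - apply part1; auto. - apply part2; auto. Qed.
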